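(* For every dimension $d\ge 2$, Algorithm ExtDrift (defined in the context) is $3$-competitive for the line chasing problem in $\mathbb{R}^d$: for every initial point $P_0\in\mathbb{R}^d$ and every finite sequence of lines $X_1,\dots,X_m$ in $\mathbb{R}^d$, the path $P_0,P_1,\dots,P_m$ produced by ExtDrift satisfies $\sum_{t=1}^m |P_{t-1}P_t| \le 3\cdot\mathrm{OPT}$, where $\mathrm{OPT}=\min\{\sum_{t=1}^m |A_{t-1}A_t| : A_0=P_0,\ A_t\in X_t\}$.
   Context: $|XY|$ denotes Euclidean distance. Line chasing problem: given an initial point $P_0\in\mathbb{R}^d$ and lines $X_1,\dots,X_m$ revealed one at a time, an online algorithm must, upon seeing $X_t$ (and not later lines), choose $P_t\in X_t$; its cost is $\sum_t|P_{t-1}P_t|$. It is $c$-competitive if its cost is at most $c\cdot\mathrm{OPT}$ on every input. Planar Algorithm Drift: given a previous line $L$ in a plane, current point $P\in L$, and new line $L'$ in that plane, for $X\in L$ let $\bar X$ be the orthogonal projection of $X$ onto $L'$. If $L'$ does not meet $L$ in a single point, move to $\bar P$. Otherwise let $S=L\cap L'$, $r=|SP|$, $h=|P\bar P|$, $s=|S\bar P|$, $x=\frac{1}{\sqrt2}(h+s-r)$, and move to the point $P'\in L'$ on the ray from $S$ through $\bar P$ (or $P'=S$ if $\bar P=S$) with $|SP'|=s-x$. Algorithm ExtDrift (in $\mathbb{R}^d$): let $L$ be the previous request line (for the first request, an arbitrary fixed line through $P_0$), $P\in L$ the current position, and $L'$ the new request. If $P\in L'$, stay at $P$. Otherwise let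 $U$ be the unique 2-dimensional plane containing $L'$ and $P$, and make the move prescribed by Drift within $U$ for the current point $P$, new line $L'$, and previous line equal to the orthogonal projection of $L$ onto $U$ (if this projection is the single point $P$, an arbitrary line in $U$ through $P$ is used). *)

(* Defs.v *)
From HB Require Import structures.
From mathcomp Require Import all_boot all_order all_algebra.
From mathcomp Require Import reals.
Set Implicit Arguments. Unset Strict Implicit. Unset Printing Implicit Defensive.
Import Order.TTheory GRing.Theory Num.Theory.
Local Open Scope ring_scope.

Section LineChasing.
Variables (R : realType) (d : nat).
Notation pt := 'rV[R]_d.

Definition dotp (u v : pt) : R := (u *m v^T) 0 0.
Definition dist (x y : pt) : R := Num.sqrt (dotp (x - y) (x - y)).

(* A line is given by a point and a direction vector (required to be nonzero
   wherever a line is used); as a set it is { p + t v | t in R }. *)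
Definition line := (pt * pt)%type.
Definition is_line (L : line) : Prop := L.2 != 0.
Definition on_line (L : line) (x : pt) : Prop := exists t : R, x = L.1 + t *: L.2.

Definition proj_line (L : line) (x : pt) : pt :=
  L.1 + (dotp (x - L.1) L.2 / dotp L.2 L.2) *: L.2.

(* The point P' of Algorithm Drift in the case L meets L' in the single
   point S: with r = |SP|, h = |P Pbar|, s = |S Pbar|, x = (h+s-r)/sqrt 2,
   P' is on the ray from S through Pbar with |SP'| = s - x (P' = S if Pbar = S). *)
Definition drift_point (S P Pb : pt) : pt :=
  let r := dist S P in let h := dist P Pb in let s := dist S Pb in
  let x := (h + s - r) / Num.sqrt 2 in
  if s == 0 then S else S + ((s - x) / s) *: (Pb - S).

Definition drift_step (L : line) (P : pt) (L' : line) (P' : pt) : Prop :=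
  let Pb := proj_line L' P in
  (~ (exists S, [/\ on_line L S, on_line L' S &
        forall S2, on_line L S2 -> on_line L' S2 -> S2 = S]) -> P' = Pb) /\
  (forall S, on_line L S -> on_line L' S ->
     (forall S2, on_line L S2 -> on_line L' S2 -> S2 = S) ->
     P' = drift_point S P Pb).

(* The 2-plane U containing L' and P (P not on L'): U = { P + a v' + b n }
   where v' is the direction of L' and n = P - Pbar (orthogonal to v'). *)
Definition plane_normal (L' : line) (P : pt) : pt := P - proj_line L' P.
Definition on_plane (L' : line) (P x : pt) : Prop :=
  exists a b : R, x = P + a *: L'.2 + b *: plane_normal L' P.
Definition proj_dir (L' : line) (P w : pt) : pt :=
  let n := plane_normal L' P in
  (dotp w L'.2 / dotp L'.2 L'.2) *: L'.2 + (dotp w n / dotp n n) *: n.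
Definition proj_plane (L' : line) (P y : pt) : pt := P + proj_dir L' P (y - P).

(* L0 is an admissible "previous line" for Drift inside U: the orthogonal
   projection of L onto U if that projection is a line, and otherwise
   (projection is the single point P) an arbitrary line in U through P. *)
Definition prev_line_in_plane (L : line) (P : pt) (L' : line) (L0 : line) : Prop :=
  is_line L0 /\
  ((exists2 y, on_line L y & forall z, on_line L z -> proj_plane L' P z = proj_plane L' P y) ->
     on_line L0 P /\ forall x, on_line L0 x -> on_plane L' P x) /\
  (~ (exists2 y, on_line L y & forall z, on_line L z -> proj_plane L' P z = proj_plane L' P y) ->
     forall x, on_line L0 x <-> exists2 y, on_line L y & x = proj_plane L' P y).

Definition extdrift_step (L : line) (P : pt) (L' : line) (P' : pt) : Prop :=
  (on_line L' P -> P' = P) /\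
  (~ on_line L' P -> exists L0, prev_line_in_plane L P L' L0 /\ drift_step L0 P L' P').

(* P 0, ..., P m is a run of ExtDrift on initial point P0 and requests
   X 1, ..., X m (every admissible resolution of the arbitrary choices). *)
Definition extdrift_run (P0 : pt) (m : nat) (X : nat -> line) (P : nat -> pt) : Prop :=
  P 0%N = P0 /\
  exists L1 : line, [/\ is_line L1, on_line L1 P0 &
    forall t, (t < m)%N -> extdrift_step (if t == 0%N then L1 else X t) (P t) (X t.+1) (P t.+1)].

Definition path_cost (m : nat) (A : nat -> pt) : R := \sum_(t < m) dist (A t) (A t.+1).

End LineChasing.

(* Main.v *)
Require Import Defs.
From HB Require Import structures.
From mathcomp Require Import all_boot all_order all_algebra.
From mathcomp Require Import reals.
From mathcomp.algebra_tactics Require Import ring lra.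
From Stdlib Require Import Classical_Prop.
Import Order.TTheory GRing.Theory Num.Theory.
Local Open Scope ring_scope.

Section Core.
Context {R : realType}.

Lemma sq_le0 (x y : R) : 0 <= y -> x ^+ 2 <= y ^+ 2 -> x <= y.
Proof. move=> *; nra. Qed.

Lemma core_ineq (r s h a U D N T K : R) :
  0 < r -> 0 <= s -> 0 <= h -> r^+2 = s^+2 + h^+2 ->
  0 < K -> K^+2 = 2 -> 0 <= T -> T^+2 = 3 ->
  0 <= D -> D^+2 = r^+2 - 2 * (s - (h + s - r) / K) * s + (s - (h + s - r) / K)^+2 ->
  0 <= N -> N^+2 = a^+2 * r^+2 - 2 * a * U * s + U^+2 ->
  D + T * `|(s - (h + s - r) / K) - U| <= T * `|1 - a| * r + 3 * N.
Proof.
move=> r0 s0 h0 hr K0 hK T0 hT D0 hD N0 hN.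
have K0' : K != 0 by rewrite gt_eqF.
have hw : s - (h + s - r) / K = s - K / 2 * (h + s - r).
  have iK : K^-1 = K / 2 by rewrite -[X in _ / X]hK; field.
  by rewrite iK mulrC.
rewrite hw; move: hD; rewrite hw; set w := s - K / 2 * (h + s - r) => hD.
have H1 : r^+2 - s^+2 - h^+2 = 0 by rewrite hr; ring.
have H2 : K^+2 - 2 = 0 by rewrite hK; ring.
have K1 : 1 < K by nra.
have K2 : K < 3/2 by nra.
have hr0 : h <= r by nra.
have sr0 : s <= r by nra.
have hsr : r <= h + s by nra.
have E1 : (r+s)^+2 * (3*(r-w)^+2 - D^+2) = h^+3 * ((6*K-4)*(r+s) + (8-6*K)*h) / 2.
  rewrite hD; apply/eqP; rewrite -subr_eq0; apply/eqP.
  have -> : (r+s)^+2 * (3*(r-w)^+2 - (r ^+ 2 - 2 * w * s + w ^+ 2)) - h^+3 * ((6*K-4)*(r+s) + (8-6*K)*h) / 2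
     = (r^+2 - s^+2 - h^+2) * (2*h^+2 - 3*h^+2*K + h^+2*K^+2 + 3*s*h*K - s*h*K^+2 - 4*s^+2 + 3*s^+2*K - s^+2*K^+2/2
         + 3*r*h*K - r*h*K^+2 - 2*r*s + 2*r^+2 - 3*r^+2*K + r^+2*K^+2/2)
       + (K^+2 - 2) * (h^+4 - s*h^+3 + s^+2*h^+2 - r*h^+3 + r*s*h^+2).
    by rewrite /w; field.
  by rewrite H1 H2; ring.
have E2 : (r+s)^+2 * (3/2*(h-s+r)^+2 - D^+2) = h^+3 * (4*(r+s)+h).
  rewrite hD; apply/eqP; rewrite -subr_eq0; apply/eqP.
  have -> : (r+s)^+2 * (3/2*(h-s+r)^+2 - (r ^+ 2 - 2 * w * s + w ^+ 2)) - h^+3 * (4*(r+s)+h)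
     = (r^+2 - s^+2 - h^+2) * (2*h^+2 - h^+2*K^+2/2 + 3*s*h + s*h*K^+2/2 - 5/2*s^+2 + s^+2*K^+2/4
         + 3*r*h + r*h*K^+2/2 - 2*r*s + r^+2/2 - r^+2*K^+2/4)
       + (K^+2 - 2) * (- h^+4/2 + s*h^+3/2 - s^+2*h^+2/2 + r*h^+3/2 - r*s*h^+2/2).
    by rewrite /w; field.
  by rewrite H1 H2; ring.
have E3 : 2 * (r+s) * w = (r+s-h)*(r+s-(K-1)*h).
  apply/eqP; rewrite -subr_eq0; apply/eqP.
  have -> : 2 * (r+s) * w - (r+s-h)*(r+s-(K-1)*h) = (r^+2 - s^+2 - h^+2) * (K - 1).
    by rewrite /w; field.
  by rewrite H1; ring.
have w0 : 0 <= w.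
  have : 0 <= 2 * (r+s) * w by rewrite E3; apply: mulr_ge0; nra.
  nra.
have wr : w <= r by rewrite /w; nra.
have rs0 : 0 < (r+s)^+2 by nra.
have Dc1 : D <= T * (r - w).
  have : 0 <= (r+s)^+2 * (3*(r-w)^+2 - D^+2).
    rewrite E1; apply: divr_ge0; last lra.
    apply: mulr_ge0; [exact: exprn_ge0 | nra].
  move=> H; have : D^+2 <= (T * (r - w))^+2.
    rewrite exprMn hT; rewrite pmulr_rge0 // subr_ge0 in H; lra.
  apply: sq_le0; apply: mulr_ge0 => //; lra.
have Dc2 : D <= T * (r + w).
  apply: sq_le0; first by apply: mulr_ge0 => //; lra.
  rewrite exprMn hT hD; nra.
have Dc3 : D <= T * (K * h - s + w).
  have : 0 <= (r+s)^+2 * (3/2*(h-s+r)^+2 - D^+2).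
    rewrite E2; apply: mulr_ge0; [exact: exprn_ge0 | nra].
  move=> H; rewrite pmulr_rge0 // subr_ge0 in H.
  have e : K * h - s + w = K / 2 * (h - s + r).
    by rewrite /w; field.
  have : D^+2 <= (T * (K * h - s + w))^+2.
    rewrite exprMn hT e exprMn.
    have -> : (K/2)^+2 = 1/2 by rewrite expr_div_n hK; field.
    lra.
  have : 0 <= K * h - s + w by rewrite e; nra.
  move=> ? ?; apply: sq_le0 => //; exact: mulr_ge0.
have Q1 : T * (a * r - U) <= 3 * N.
  have : 4 * r * (a^+2*r^+2 + U^+2 + a*U*(r - 3*s)) = (r + 3*s)*(a*r-U)^+2 + (3*r - 3*s)*(a*r+U)^+2 by ring.
  move=> e; have : 0 <= a^+2*r^+2 + U^+2 + a*U*(r - 3*s).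
    have : 0 <= 4 * r * (a^+2*r^+2 + U^+2 + a*U*(r - 3*s)) by rewrite e; apply: addr_ge0; apply: mulr_ge0; rewrite ?sqr_ge0 //; lra.
    by rewrite pmulr_rge0 //; lra.
  move=> H; apply: sq_le0; first lra. rewrite !exprMn hT hN; nra.
have Q2 : 3 * s <= r -> T * (U + a * r) <= 3 * N.
  move=> s3.
  have : 4 * r * (a^+2*r^+2 + U^+2 - a*U*(r + 3*s)) = (3*r + 3*s)*(a*r-U)^+2 + (r - 3*s)*(a*r+U)^+2 by ring.
  move=> e; have : 0 <= a^+2*r^+2 + U^+2 - a*U*(r + 3*s).
    have : 0 <= 4 * r * (a^+2*r^+2 + U^+2 - a*U*(r + 3*s)) by rewrite e; apply: addr_ge0; apply: mulr_ge0; rewrite ?sqr_ge0 //; lra.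
    by rewrite pmulr_rge0 //; lra.
  move=> H; apply: sq_le0; first lra. rewrite !exprMn hT hN; nra.
have Q3 : T * (U + a * (K * h - s)) <= 3 * N.
  have e : 3 * N^+2 - (U + a * (K*h - s))^+2 = (a * (h + K * s) - K * U)^+2.
    rewrite hN; apply/eqP; rewrite -subr_eq0; apply/eqP.
    have -> : 3 * (a ^+ 2 * r ^+ 2 - 2 * a * U * s + U ^+ 2) - (U + a * (K * h - s)) ^+ 2 - (a * (h + K * s) - K * U) ^+ 2
      = (r^+2 - s^+2 - h^+2) * (3 * a^+2) + (K^+2 - 2) * (- U^+2 - h^+2*a^+2 + 2*s*a*U - s^+2*a^+2) by ring.
    by rewrite H1 H2; ring.
  apply: sq_le0; first lra. rewrite !exprMn hT.
  have sq := sqr_ge0 (a * (h + K * s) - K * U); rewrite -e in sq; lra.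
have Lr : (1 - a) * r <= `|1 - a| * r by apply: ler_wpM2r; [lra | exact: ler_norm].
have LrT := ler_wpM2l T0 Lr.
case: (lerP U w) => Uw.
  lra.
case: (lerP (3 * s) r) => s3.
  have := Q2 s3. lra.
have Lh1 : K * h - s <= r.
  have : K * h <= r + s.
    apply: sq_le0; first lra.
    rewrite exprMn hK.
    have : 0 <= (r + s) * (3 * s - r) by apply: mulr_ge0; lra.
    nra.
  lra.
have Lh2 : - r <= K * h - s by nra.
have Lb : (1 - a) * (K * h - s) <= `|1 - a| * r.
  apply: le_trans (ler_norm _) _.
  rewrite normrM; apply: ler_wpM2l; first exact: normr_ge0.
  by rewrite ler_norml; apply/andP; split.
have LbT := ler_wpM2l T0 Lb.
lra.
Qed.
End Core.

Section Vec.
Context {R : realType} {d : nat}.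
Notation pt := 'rV[R]_d.
Implicit Types u v w x y z : pt.

Lemma dotpE u v : dotp u v = \sum_j u 0 j * v 0 j.
Proof. by rewrite /dotp !mxE; apply: eq_bigr => j _; rewrite mxE. Qed.

Lemma dotpC u v : dotp u v = dotp v u.
Proof. by rewrite !dotpE; apply: eq_bigr => j _; rewrite mulrC. Qed.

Lemma dotpDl u v w : dotp (u + v) w = dotp u w + dotp v w.
Proof. by rewrite !dotpE -big_split; apply: eq_bigr => j _; rewrite mxE mulrDl. Qed.

Lemma dotpZl k u v : dotp (k *: u) v = k * dotp u v.
Proof. by rewrite !dotpE mulr_sumr; apply: eq_bigr => j _; rewrite mxE mulrA. Qed.

Lemma dotpNl u v : dotp (- u) v = - dotp u v.
Proof. by rewrite -scaleN1r dotpZl mulN1r. Qed.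

Lemma dotpBl u v w : dotp (u - v) w = dotp u w - dotp v w.
Proof. by rewrite dotpDl dotpNl. Qed.

Lemma dotpDr u v w : dotp w (u + v) = dotp w u + dotp w v.
Proof. by rewrite dotpC dotpDl !(dotpC w). Qed.

Lemma dotpZr k u v : dotp v (k *: u) = k * dotp v u.
Proof. by rewrite dotpC dotpZl dotpC. Qed.

Lemma dotpNr u v : dotp v (- u) = - dotp v u.
Proof. by rewrite dotpC dotpNl dotpC. Qed.

Lemma dotpBr u v w : dotp w (u - v) = dotp w u - dotp w v.
Proof. by rewrite dotpDr dotpNr. Qed.

Lemma dotp0l u : dotp 0 u = 0.
Proof. by rewrite -(scale0r 0) dotpZl mul0r. Qed.

Lemma dotp0r u : dotp u 0 = 0.
Proof. by rewrite dotpC dotp0l. Qed.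

Lemma dotp_ge0 u : 0 <= dotp u u.
Proof. by rewrite dotpE; apply: sumr_ge0 => j _; by rewrite -expr2 sqr_ge0. Qed.

Lemma dotp_eq0 u : dotp u u = 0 -> u = 0.
Proof.
rewrite dotpE => /eqP; rewrite psumr_eq0; last by move=> j _; by rewrite -expr2 sqr_ge0.
move/allP => H; apply/rowP => j; rewrite !mxE.
have := H j (mem_index_enum j); rewrite /= mulf_eq0 orbb => /eqP ->; done.
Qed.

Definition nrm u := Num.sqrt (dotp u u).

Lemma nrm_ge0 u : 0 <= nrm u.
Proof. exact: sqrtr_ge0. Qed.

Lemma nrm_sq u : nrm u ^+ 2 = dotp u u.
Proof. by rewrite sqr_sqrtr // dotp_ge0. Qed.

Lemma sqrt_unique (a c : R) : 0 <= c -> c ^+ 2 = a -> Num.sqrt a = c.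
Proof. by move=> c0 <-; rewrite sqrtr_sqr ger0_norm. Qed.

Lemma nrm_unique u c : 0 <= c -> c ^+ 2 = dotp u u -> nrm u = c.
Proof. by move=> c0 e; rewrite /nrm; apply: sqrt_unique. Qed.

Lemma nrmZ k u : nrm (k *: u) = `|k| * nrm u.
Proof.
apply: nrm_unique; first by rewrite mulr_ge0 ?normr_ge0 ?nrm_ge0.
by rewrite exprMn nrm_sq real_normK ?num_real // dotpZl dotpZr expr2 mulrA.
Qed.

Lemma nrmN u : nrm (- u) = nrm u.
Proof. by rewrite -scaleN1r nrmZ normrN1 mul1r. Qed.

Lemma CS u v : dotp u v ^+ 2 <= dotp u u * dotp v v.
Proof.
have [V0|V0] := eqVneq (dotp v v) 0.
  by rewrite (dotp_eq0 _ V0) dotp0r dotp0r expr0n /= mulr0.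
have Vp : 0 < dotp v v by rewrite lt_def V0 dotp_ge0.
have := dotp_ge0 (dotp v v *: u - dotp u v *: v).
rewrite !(dotpBl, dotpBr, dotpZl, dotpZr) (dotpC v u) => H.
have : 0 <= dotp v v * (dotp u u * dotp v v - dotp u v ^+ 2) by nra.
by rewrite pmulr_rge0 // subr_ge0.
Qed.

Lemma sq_le (x y : R) : 0 <= y -> x ^+ 2 <= y ^+ 2 -> x <= y.
Proof. move=> *; nra. Qed.

Lemma dotp_le u v : dotp u v <= nrm u * nrm v.
Proof.
apply: sq_le; first by rewrite mulr_ge0 ?nrm_ge0.
by rewrite exprMn !nrm_sq CS.
Qed.

Lemma nrm_tri u v : nrm (u + v) <= nrm u + nrm v.
Proof.
apply: sq_le; first by rewrite addr_ge0 ?nrm_ge0.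
rewrite nrm_sq !(dotpDl, dotpDr) (dotpC v u) sqrrD !nrm_sq.
have := dotp_le u v; lra.
Qed.

Lemma distC x y : dist x y = dist y x.
Proof. by rewrite /dist -opprB dotpNl dotpNr opprK. Qed.

Lemma distE x y : dist x y = nrm (x - y).
Proof. by []. Qed.

Lemma dist_tri x y z : dist x z <= dist x y + dist y z.
Proof.
rewrite !distE; have -> : x - z = (x - y) + (y - z) by rewrite addrA subrK.
exact: nrm_tri.
Qed.

Lemma dist_ge0 x y : 0 <= dist x y.
Proof. exact: sqrtr_ge0. Qed.

Lemma dist_xx x : dist x x = 0.
Proof. by rewrite distE subrr /nrm dotp0l sqrtr0. Qed.

End Vec.

Ltac fld := field; repeat (apply/andP; split); try done.

Section Inter.
Context {R : realType} {d : nat}.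
Notation pt := 'rV[R]_d.

Lemma nrm_pos {u : pt} : u != 0 -> 0 < nrm u.
Proof.
move=> u0; rewrite lt_def nrm_ge0 andbT; apply/eqP => e.
have : dotp u u = 0 by rewrite -nrm_sq e expr0n.
by move/dotp_eq0; apply/eqP.
Qed.

Lemma inter_case (S P A0 A' f : pt) (a u : R) :
  f != 0 -> (forall t : R, P <> S + t *: f) ->
  A0 = S + a *: (P - S) -> A' = S + u *: f ->
  forall Pb, Pb = S + (dotp (P - S) f / dotp f f) *: f ->
  dist P (drift_point S P Pb) + Num.sqrt 3 * dist (drift_point S P Pb) A'
   <= Num.sqrt 3 * dist P A0 + 3 * dist A0 A'.
Proof.
move=> f0 Pn eA0 eA' Pb ePb.
set v := P - S; set F := dotp f f; set C := dotp v f; set V := dotp v v.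
rewrite -/v -/F -/C in ePb.
have eP : P = S + v by rewrite /v addrC subrK.
clearbody v; subst P.
rewrite addrAC subrr add0r in eA0.
have rho0 := nrm_pos f0; set rho := nrm f.
have eF : F = rho ^+ 2 by rewrite nrm_sq.
have F0 : 0 < F by rewrite eF exprn_gt0.
have F0' : F != 0 by rewrite gt_eqF.
rewrite /drift_point /=.
set r := dist S (S + v); set s := dist S Pb; set h := dist (S + v) Pb.
have er : r = nrm v by rewrite /r distC distE addrC addKr.
have es : s = `|C| / rho.
  rewrite /s distE ePb opprD addrA subrr add0r nrmN nrmZ -/rho normrM.
  rewrite (@ger0_norm _ F^-1); last by rewrite invr_ge0 ltW.
  by rewrite eF; field; rewrite gt_eqF.
have eh : h = nrm (v - (C / F) *: f) by rewrite /h distE ePb opprD addrACA subrr add0r.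
have h2 : h ^+ 2 = V - C ^+ 2 / F.
  rewrite eh nrm_sq !(dotpBl, dotpBr, dotpZl, dotpZr) ?(dotpC f v) -/C -/F -/V.
  by field.
have h0 : 0 < h.
  rewrite lt_def dist_ge0 andbT; apply/eqP => e0.
  have : dotp (v - (C / F) *: f) (v - (C / F) *: f) = 0 by rewrite -nrm_sq -eh e0 expr0n.
  move/dotp_eq0/eqP; rewrite subr_eq0 => /eqP ev.
  by apply: (Pn (C / F)); rewrite ev.
have r2 : r ^+ 2 = V by rewrite er nrm_sq.
have s2 : s ^+ 2 = C ^+ 2 / F by rewrite es expr_div_n real_normK ?num_real // eF.
have rs : r ^+ 2 = s ^+ 2 + h ^+ 2 by rewrite r2 s2 h2; ring.
have s0 : 0 <= s by exact: dist_ge0.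
have r0 : 0 < r by have := dist_ge0 S (S + v); rewrite -/r; nra.
set K := Num.sqrt 2; set T := Num.sqrt 3.
have K0 : 0 < K by rewrite sqrtr_gt0.
have hK : K ^+ 2 = 2 by rewrite sqr_sqrtr.
have T0 : 0 <= T by exact: sqrtr_ge0.
have hT : T ^+ 2 = 3 by rewrite sqr_sqrtr.
set x := (h + s - r) / K.
set k := if s == 0 then 0 else (s - x) / s * (C / F).
have eP' : (if s == 0 then S else S + ((s - x) / s) *: (Pb - S)) = S + k *: f.
  rewrite /k; case: ifP => _; first by rewrite scale0r addr0.
  have -> : Pb - S = (C / F) *: f by rewrite ePb addrC addKr.
  by rewrite scalerA.
rewrite eP'.
have dPP : dist (S + v) (S + k *: f) = nrm (v - k *: f) by rewrite distE opprD addrACA subrr add0r.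
have dPA : dist (S + k *: f) A' = `|k - u| * rho.
  by rewrite distE eA' opprD addrACA subrr add0r -scalerBl nrmZ.
have dA0 : dist (S + v) A0 = `|1 - a| * r.
  rewrite distE eA0 opprD addrACA subrr add0r.
  have -> : v - a *: v = (1 - a) *: v by rewrite scalerBl scale1r.
  by rewrite nrmZ er.
have dAA : dist A0 A' = nrm (a *: v - u *: f).
  by rewrite distE eA0 eA' opprD addrACA subrr add0r.
rewrite dPP dPA dA0 dAA.
set sg : R := if 0 <= C then 1 else -1.
have sgC : C = sg * `|C| by rewrite /sg; case: (lerP 0 C) => Cs; [rewrite mul1r ger0_norm | rewrite ltr0_norm // mulN1r opprK].
have sg2 : sg ^+ 2 = 1 by rewrite /sg; case: ifP => _; rewrite ?expr1n ?sqrrN ?expr1n.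
have sgn : `|sg| = 1 by rewrite /sg; case: ifP => _; rewrite ?normr1 ?normrN1.
have rho0' : rho != 0 by rewrite gt_eqF.
set U := sg * u * rho.
have Cs : `|C| = s * rho by rewrite es; field.
have hD : nrm (v - k *: f) ^+ 2 = r ^+ 2 - 2 * (s - (h + s - r) / K) * s + (s - (h + s - r) / K) ^+ 2.
  rewrite nrm_sq !(dotpBl, dotpBr, dotpZl, dotpZr) ?(dotpC f v) -/C -/F -/V -r2 -/x /k.
  case: ifP => /eqP sE.
    have C0 : C = 0 by rewrite sgC Cs sE !mul0r mulr0.
    have hr : h = r by move: h2; rewrite -r2 C0 expr0n /= mul0r subr0; nra.
    by rewrite /x hr sE; field; rewrite gt_eqF.
  set c := (s - x) / s * (C / F).
  have sE' : s != 0 by apply/eqP.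
  have e1 : c * C = (s - x) * s.
    have -> : c * C = (s - x) / s * (C ^+ 2 / F) by rewrite /c; fld.
    by rewrite -s2; fld.
  have e2 : c * c * F = (s - x) ^+ 2.
    have -> : c * c * F = ((s - x) / s) ^+ 2 * (C ^+ 2 / F) by rewrite /c; fld.
    by rewrite -s2; fld.
  transitivity (r ^+ 2 - 2 * (c * C) + c * c * F); first by ring.
  by rewrite e1 e2 /x; ring.
have hN : nrm (a *: v - u *: f) ^+ 2 = a ^+ 2 * r ^+ 2 - 2 * a * U * s + U ^+ 2.
  rewrite nrm_sq !(dotpBl, dotpBr, dotpZl, dotpZr) ?(dotpC f v) -/C -/F -/V r2 /U.
  rewrite sgC Cs eF !exprMn sg2; ring.
have ekU : `|k - u| * rho = `|(s - (h + s - r) / K) - U|.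
  have -> : `|k - u| * rho = `|(k - u) * rho| by rewrite normrM (@ger0_norm _ rho (ltW rho0)).
  rewrite -/x -[LHS]mul1r -sgn -normrM /U /k.
  case: ifP => /eqP sE.
    have C0 : C = 0 by rewrite sgC Cs sE !mul0r mulr0.
    have hr : h = r by move: h2; rewrite -r2 C0 expr0n /= mul0r subr0; nra.
    rewrite /x hr sE.
    by congr (`| _ |); field; rewrite gt_eqF.
  congr (`| _ |).
  rewrite sgC Cs eF.
  have sE' : s != 0 by apply/eqP.
  have -> : sg * (((s - x) / s * (sg * (s * rho) / rho ^+ 2) - u) * rho) = sg ^+ 2 * (s - x) - sg * u * rho by fld.
  by rewrite sg2 mul1r.
rewrite ekU.
rewrite [T * (`|1 - a| * r)]mulrA.
apply: core_ineq => //; first exact: ltW.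
  exact: nrm_ge0.
exact: nrm_ge0.
Qed.
End Inter.

Ltac fld2 := field; repeat (apply/andP; split); try done.

Section Planar.
Context {R : realType} {d : nat}.
Notation pt := 'rV[R]_d.

Lemma par_ineq (nN rho mu nu M T : R) : 0 <= nN -> 0 <= rho -> 0 <= M ->
  0 <= T -> T ^+ 2 = 3 ->
  M ^+ 2 = nN ^+ 2 + (mu - nu) ^+ 2 * rho ^+ 2 ->
  nN + T * (`|nu| * rho) <= T * (`|mu| * rho) + 3 * M.
Proof.
move=> n0 r0 M0 T0 hT hM.
set y := `|mu - nu| * rho.
have y0 : 0 <= y by rewrite mulr_ge0.
have y2 : y ^+ 2 = (mu - nu) ^+ 2 * rho ^+ 2 by rewrite exprMn real_normK ?num_real.
have t1 : `|nu| * rho <= `|mu| * rho + y.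
  rewrite /y -mulrDl; apply: ler_wpM2r => //.
  rewrite distrC; have := ler_normD mu (nu - mu).
  by rewrite addrC subrK.
have t1' := ler_wpM2l T0 t1.
have t2 : nN + T * y <= 3 * M.
  apply: sq_le; first lra.
  have := sqr_ge0 (T * nN - y).
  rewrite exprMn hM -y2; nra.
lra.
Qed.

Lemma on_lineP (L : line R d) x : on_line L x <-> exists t, x = L.1 + t *: L.2.
Proof. by []. Qed.

Lemma planar (L0 L' : line R d) (P P' A0 A' : pt) :
  is_line L' -> ~ on_line L' P -> on_line L0 P -> on_line L0 A0 ->
  (forall x, on_line L0 x -> on_plane L' P x) -> on_line L' A' ->
  drift_step L0 P L' P' ->
  dist P P' + Num.sqrt 3 * dist P' A' <= Num.sqrt 3 * dist P A0 + 3 * dist A0 A'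
  /\ on_line L' P'.
Proof.
case: L0 => o0 g; case: L' => o f.
rewrite /is_line /= => f0 Pn [tP eP] [tA eA0] Hpl [tA' eA'] [Hnot Hint].
rewrite /= in eP eA0 eA'.
set F := dotp f f.
have F0 : 0 < F by rewrite /F -nrm_sq exprn_gt0 // nrm_pos.
have F0' : F != 0 by rewrite gt_eqF.
set Pb := proj_line (o, f) P.
set cP := dotp (P - o) f / F.
have ePb : Pb = o + cP *: f by [].
have PbL : on_line (o, f) Pb by exists cP.
case: (classic (exists S, [/\ on_line (o0, g) S, on_line (o, f) S &
        forall S2, on_line (o0, g) S2 -> on_line (o, f) S2 -> S2 = S])) => [[S [[tS0 eS0] [tS eS] Suniq]]|Hno].
  have eP' := Hint S (ex_intro _ tS0 eS0) (ex_intro _ tS eS) Suniq.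
  rewrite /= in eS0 eS.
  have PS : tP - tS0 != 0.
    apply/eqP => e; apply: Pn; exists tS; rewrite /= -eS eP eS0.
    by have -> : tP = tS0 by apply/eqP; rewrite -subr_eq0; apply/eqP.
  have ePb' : Pb = S + (dotp (P - S) f / dotp f f) *: f.
    rewrite ePb eS /cP -/F.
    have -> : dotp (P - (o + tS *: f)) f / F = dotp (P - o) f / F - tS.
      by rewrite opprD addrA !dotpBl dotpZl -/F; fld2.
    by apply/rowP => i; rewrite !mxE; ring.
  split.
    have HPn : forall t, P <> S + t *: f.
      move=> t et; apply: Pn; exists (tS + t); rewrite /= et eS.
      by apply/rowP => i; rewrite !mxE; ring.
    have HA0 : A0 = S + ((tA - tS0) / (tP - tS0)) *: (P - S).
      rewrite eA0 eP eS0; apply/rowP => i; rewrite !mxE.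
      by fld2.
    have HA' : A' = S + (tA' - tS) *: f.
      by rewrite eA' eS; apply/rowP => i; rewrite !mxE; ring.
    rewrite eP'.
    exact: (inter_case _ _ _ _ _ _ _ f0 HPn HA0 HA' _ ePb').
  rewrite eP' /drift_point /=; case: ifP => _; first by exists tS.
  have -> : proj_line (o, f) P - S = (dotp (P - S) f / F) *: f by rewrite -/Pb ePb' addrC addKr.
  by rewrite scalerA eS -addrA -scalerDl; eexists.
have eP' := Hnot Hno.
set n := plane_normal (o, f) P.
have en : n = P - Pb by [].
have hn : plane_normal (o, f) P = n by [].
clearbody n.
have Pon : P - o = n + cP *: f by rewrite en ePb; apply/rowP => i; rewrite !mxE; ring.
have nf : dotp n f = 0.
  rewrite en ePb opprD addrA !dotpBl dotpZl /cP dotpBl -/F; fld2.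
have n0 : n != 0.
  apply/eqP => e0; apply: Pn; exists cP; rewrite /=.
  by move/eqP: e0; rewrite en subr_eq0 ePb => /eqP.
set N := dotp n n.
have N0 : 0 < N by rewrite /N -nrm_sq exprn_gt0 // nrm_pos.
have N0' : N != 0 by rewrite gt_eqF.
have [a1 [b1 e1]] := Hpl o0 (ex_intro _ 0 (esym (etrans (congr1 (fun z => o0 + z) (scale0r g)) (addr0 o0)))).
have [a2 [b2 e2]] : on_plane (o, f) P (o0 + g) by apply: Hpl; exists 1; rewrite scale1r.
rewrite /= hn in e1 e2.
set ga := a2 - a1; set de := b2 - b1.
have eg : g = ga *: f + de *: n.
  apply/rowP => i; have := congr1 (fun M : pt => M 0 i) e1; have := congr1 (fun M : pt => M 0 i) e2.
  rewrite !mxE /ga /de; lra.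
have [de0|de0] := eqVneq de 0; last first.
  exfalso; apply: Hno.
  exists (P + (- de^-1) *: g); split.
  - exists (tP - de^-1); rewrite /= eP; apply/rowP => i; rewrite !mxE; ring.
  - exists (cP - de^-1 * ga); rewrite /= eg en ePb; apply/rowP => i; rewrite !mxE; fld2.
  - move=> S2 [t2 e2'] [t' e3]; rewrite /= in e2' e3.
    have k1 : dotp (S2 - o) n = 0.
      by rewrite e3 addrAC subrr add0r dotpZl (dotpC f n) nf mulr0.
    have eS2 : S2 - P = (t2 - tP) *: g by rewrite e2' eP; apply/rowP => i; rewrite !mxE; ring.
    have k2 : dotp (S2 - o) n = N + (t2 - tP) * de * N.
      have -> : S2 - o = (S2 - P) + (P - o) by rewrite addrA subrK.
      rewrite eS2 Pon eg !(dotpDl, dotpZl) (dotpC f n) nf -/N; ring.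
    have et : t2 - tP = - de^-1.
      have : N * (1 + (t2 - tP) * de) = 0 by rewrite -k1 k2; ring.
      move/eqP; rewrite mulf_eq0 (negbTE N0') /= => /eqP h1.
      by apply: (mulIf de0); rewrite mulNr mulVf //; lra.
    by rewrite -et -eS2 addrC subrK.
rewrite de0 scale0r addr0 in eg.
have eA0' : P - A0 = ((tP - tA) * ga) *: f by rewrite eP eA0 eg; apply/rowP => i; rewrite !mxE; ring.
have eAA : A0 - A' = n + (cP - tA' - (tP - tA) * ga) *: f.
  have -> : A0 - A' = (P - o) - (P - A0) - (A' - o) by apply/rowP => i; rewrite !mxE; ring.
  by rewrite Pon eA0' eA'; apply/rowP => i; rewrite !mxE; ring.
have ePbA : Pb - A' = (cP - tA') *: f by rewrite ePb eA'; apply/rowP => i; rewrite !mxE; ring.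
split; last by rewrite eP'.
rewrite eP' !distE -en eA0' ePbA !nrmZ.
rewrite -[nrm (A0 - A')]/(dist A0 A') distE.
apply: par_ineq; rewrite ?nrm_ge0 ?sqrtr_ge0 ?sqr_sqrtr ?dotp_ge0 //.
rewrite eAA !(dotpDl, dotpDr, dotpZl, dotpZr) (dotpC f n) nf -/N -/F; ring.
Qed.
End Planar.

Ltac fld3 := field; repeat (apply/andP; split); try done.

Section Step.
Context {R : realType} {d : nat}.
Notation pt := 'rV[R]_d.

Lemma proj_plane_on (L' : line R d) (P y : pt) : on_plane L' P (proj_plane L' P y).
Proof. by rewrite /proj_plane /proj_dir; do 2 eexists; rewrite addrA. Qed.

Lemma proj_plane_self (L' : line R d) (P : pt) : proj_plane L' P P = P.
Proof. by rewrite /proj_plane /proj_dir subrr !dotp0l !mul0r !scale0r !addr0. Qed.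

Lemma proj_props (L' : line R d) (P : pt) : is_line L' -> ~ on_line L' P ->
  (forall x y, dist (proj_plane L' P x) (proj_plane L' P y) <= dist x y) /\
  (forall A', on_line L' A' -> proj_plane L' P A' = A').
Proof.
case: L' => o f; rewrite /is_line /= => f0 Pn.
set F := dotp f f.
have F0 : 0 < F by rewrite /F -nrm_sq exprn_gt0 // nrm_pos.
have F0' : F != 0 by rewrite gt_eqF.
set cP := dotp (P - o) f / F.
set n := plane_normal (o, f) P.
have en : n = P - (o + cP *: f) by [].
rewrite /proj_plane /proj_dir -/n /=.
clearbody n.
have nf : dotp n f = 0.
  rewrite en opprD addrA !dotpBl dotpZl /cP dotpBl -/F; fld3.
have n0 : n != 0.
  apply/eqP => e0; apply: Pn; exists cP; rewrite /=.
  by move/eqP: e0; rewrite en subr_eq0 => /eqP.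
set N := dotp n n.
have N0 : 0 < N by rewrite /N -nrm_sq exprn_gt0 // nrm_pos.
have N0' : N != 0 by rewrite gt_eqF.
split.
  move=> x y; rewrite !distE.
  set pd := fun w : pt => (dotp w f / F) *: f + (dotp w n / N) *: n.
  have -> : P + pd (x - P) - (P + pd (y - P)) = pd (x - y).
    rewrite /pd !dotpBl; apply/rowP => i; rewrite !mxE; ring.
  move: (x - y) => w.
  apply: sq_le; first exact: nrm_ge0.
  rewrite !nrm_sq.
  have key : dotp (w - pd w) (w - pd w) = dotp w w - dotp (pd w) (pd w).
    rewrite /pd !(dotpBl, dotpBr, dotpDl, dotpDr, dotpNl, dotpNr, dotpZl, dotpZr) ?(dotpC f n) nf -/F -/N
      ?(dotpC f w) ?(dotpC n w).
    fld3.
  have := dotp_ge0 (w - pd w); rewrite key; lra.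
move=> A' [t eA']; rewrite /= in eA'.
have eAP : A' - P = (t - cP) *: f - n by rewrite eA' en; apply/rowP => i; rewrite !mxE; ring.
rewrite eAP !(dotpBl, dotpZl) (dotpC f n) nf -/F -/N.
by rewrite eA' en; apply/rowP => i; rewrite !mxE; fld3.
Qed.

Lemma sqrt3_le3 : Num.sqrt (3 : R) <= 3.
Proof.
apply: sq_le; first lra.
by rewrite sqr_sqrtr //; lra.
Qed.

Lemma step_ineq (L L' : line R d) (P P' A A' : pt) :
  is_line L' -> on_line L P -> on_line L A -> on_line L' A' ->
  extdrift_step L P L' P' ->
  dist P P' + Num.sqrt 3 * dist P' A' <= Num.sqrt 3 * dist P A + 3 * dist A A'
  /\ on_line L' P'.
Proof.
move=> f0 PL AL A'L [Hstay Hmove].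
have T0 : 0 <= Num.sqrt (3 : R) by exact: sqrtr_ge0.
have T3 := sqrt3_le3.
case: (classic (on_line L' P)) => HP.
  rewrite (Hstay HP) dist_xx add0r; split => //.
  have h1 := ler_wpM2l T0 (dist_tri P A A').
  have h2 := ler_wpM2r (dist_ge0 A A') T3.
  rewrite mulrDr in h1; lra.
have [L0 [[_ [Hdeg Hndeg]] Hdrift]] := Hmove HP.
have [Hlip Hfix] := proj_props _ _ f0 HP.
set A0 := proj_plane L' P A.
have [HP0 HA0 Hpl] : [/\ on_line L0 P, on_line L0 A0 &
    forall x, on_line L0 x -> on_plane L' P x].
  case: (classic (exists2 y, on_line L y & forall z, on_line L z -> proj_plane L' P z = proj_plane L' P y)) => D.
    have [HP0 Hpl] := Hdeg D.
    have eA0 : A0 = P.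
      case: D => y _ Hy; rewrite /A0 Hy // -(Hy P PL) proj_plane_self //.
    by rewrite eA0.
  have H := Hndeg D.
  split.
  - by apply/H; exists P => //; rewrite proj_plane_self.
  - by apply/H; exists A.
  - by move=> x /H [y _ ->]; exact: proj_plane_on.
have [Hin Hon] := planar _ _ _ _ _ _ f0 HP HP0 HA0 Hpl A'L Hdrift.
split => //.
have d1 : dist P A0 <= dist P A by rewrite -{1}(proj_plane_self L' P); exact: (Hlip P A).
have d2 : dist A0 A' <= dist A A' by rewrite -{1}(Hfix A' A'L); exact: (Hlip A A').
have d1' := ler_wpM2l T0 d1.
have d2' := ler_wpM2l (ler0n _ 3) d2.
lra.
Qed.
End Step.

Theorem mainTheorem2 (R : realType) (d : nat) (hd : (2 <= d)%N)
  (P0 : 'rV[R]_d) (m : nat) (X : nat -> line R d) (P : nat -> 'rV[R]_d) :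
  (forall t, (1 <= t <= m)%N -> is_line (X t)) ->
  extdrift_run P0 m X P ->
  forall A : nat -> 'rV[R]_d, A 0%N = P0 ->
    (forall t, (1 <= t <= m)%N -> on_line (X t) (A t)) ->
    path_cost m P <= 3 * path_cost m A.
Proof.
move=> HX [HP0 [L1 [L1line P0L1 Hstep]]] A HA0 HA.
have T0 : 0 <= Num.sqrt (3 : R) by exact: sqrtr_ge0.
have key : forall k, (k <= m)%N ->
  on_line (if k == 0%N then L1 else X k) (P k) /\
  \sum_(t < k) dist (P t) (P t.+1) + Num.sqrt 3 * dist (P k) (A k)
    <= 3 * \sum_(t < k) dist (A t) (A t.+1).
  elim=> [|k IH] km.
    rewrite /= HP0 HA0 !big_ord0 dist_xx mulr0 addr0 mulr0; split => //.
  have km' : (k <= m)%N by apply: ltnW.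
  have [Pk Hk] := IH km'.
  have Ak : on_line (if k == 0%N then L1 else X k) (A k).
    case: eqP => [->|/eqP k0]; first by rewrite HA0.
    by apply: HA; rewrite lt0n k0 km'.
  have Xl : is_line (X k.+1) by apply: HX; rewrite km.
  have Ak1 : on_line (X k.+1) (A k.+1) by apply: HA; rewrite km.
  have [Hin Hon] := step_ineq _ _ _ _ _ _ Xl Pk Ak Ak1 (Hstep k km).
  split => //.
  rewrite !big_ord_recr /=.
  lra.
have [_ Hm] := key m (leqnn m).
rewrite /path_cost.
have := mulr_ge0 T0 (dist_ge0 (P m) (A m)).
lra.
Qed.
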